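(* If $(a_{ij})\in\mathbb P^9$ satisfies the five Plücker relations and the superintegrability conditions (SIC), then the polynomial $D(z,w)$ decomposes over $\mathbb C$ into a product of polynomials of degree at most one in $z,w$.
   Context: Homogeneous coordinates $a_{ij}$ ($i,j\ge0$, $i+j\le3$) on $\mathbb P^9$. Define $D(z,w)=\sum_{0\le i,j\le2,(i,j)\ne(2,2)}a_{ij}z^iw^j$ (a cubic with no $z^3,w^3,z^2w^2$ terms), $A_z(w)=a_{21}w^2+2a_{20}w+a_{30}$, $B_w(z)=a_{12}z^2+2a_{02}z+a_{03}$ (names of polynomials; subscripts on $D$ are partial derivatives). Plücker relations: $a_{03}a_{21}-a_{02}a_{11}+a_{01}a_{12}=0$, $a_{03}a_{20}-a_{02}a_{10}+a_{00}a_{12}=0$, $a_{03}a_{30}-a_{01}a_{10}+a_{00}a_{11}=0$, $a_{02}a_{30}-a_{01}a_{20}+a_{00}a_{21}=0$, $a_{12}a_{30}-a_{11}a_{20}+a_{10}a_{21}=0$. (SIC): the polynomial identities $3A_zDD_{ww}-2A_zB_wD_z-2A_zD_w^2+DD_wD_{zz}=0$, $3B_wDD_{zz}-2A_zB_wD_w-2B_wD_z^2+DD_zD_{ww}=0$, $2D^2D_{zz}D_{ww}-B_wDD_zD_{zz}-A_zDD_wD_{ww}-A_zB_wD_zD_w+A_z^2B_w^2=0$ in $\mathbb C[z,w]$. *)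

(* Defs.v *)
From HB Require Import structures.
From mathcomp Require Import all_boot all_order all_algebra.
From mathcomp Require Import complex.
From mathcomp Require Import mpoly.
Set Implicit Arguments. Unset Strict Implicit. Unset Printing Implicit Defensive.
Import Order.TTheory GRing.Theory Num.Theory.
Local Open Scope ring_scope.

(* Coordinates a_{ij} (i+j <= 3) are given as a function a : nat -> nat -> F;
   only the values with i + j <= 3 are ever used. *)
Section SIC.
Variable F : fieldType.
Implicit Types a : nat -> nat -> F.

Definition zv : {mpoly F[2]} := 'X_(ord0 : 'I_2).
Definition wv : {mpoly F[2]} := 'X_(ord_max : 'I_2).

Definition mono a (i j : nat) : {mpoly F[2]} := a i j *: (zv ^+ i * wv ^+ j).

Definition Dpoly a : {mpoly F[2]} :=
  mono a 0 0 + mono a 1 0 + mono a 0 1 + mono a 2 0 + mono a 1 1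
  + mono a 0 2 + mono a 2 1 + mono a 1 2.

Definition Azpoly a : {mpoly F[2]} :=
  a 2 1 *: wv ^+ 2 + (2 * a 2 0) *: wv + (a 3 0)%:MP.
Definition Bwpoly a : {mpoly F[2]} :=
  a 1 2 *: zv ^+ 2 + (2 * a 0 2) *: zv + (a 0 3)%:MP.

Definition dz (p : {mpoly F[2]}) := mderiv (ord0 : 'I_2) p.
Definition dw (p : {mpoly F[2]}) := mderiv (ord_max : 'I_2) p.

Definition proj_point a := exists i j, (i + j <= 3)%N /\ a i j != 0.

Definition plucker a :=
  [/\ a 0 3 * a 2 1 - a 0 2 * a 1 1 + a 0 1 * a 1 2 = 0,
      a 0 3 * a 2 0 - a 0 2 * a 1 0 + a 0 0 * a 1 2 = 0,
      a 0 3 * a 3 0 - a 0 1 * a 1 0 + a 0 0 * a 1 1 = 0,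
      a 0 2 * a 3 0 - a 0 1 * a 2 0 + a 0 0 * a 2 1 = 0 &
      a 1 2 * a 3 0 - a 1 1 * a 2 0 + a 1 0 * a 2 1 = 0].

Definition SIC a :=
  let D := Dpoly a in let A := Azpoly a in let B := Bwpoly a in
  let Dz := dz D in let Dw := dw D in
  let Dzz := dz Dz in let Dww := dw Dw in
  [/\ 3%:R * A * D * Dww - 2%:R * A * B * Dz - 2%:R * A * Dw ^+ 2
        + D * Dw * Dzz = 0,
      3%:R * B * D * Dzz - 2%:R * A * B * Dw - 2%:R * B * Dz ^+ 2
        + D * Dz * Dww = 0 &
      2%:R * D ^+ 2 * Dzz * Dww - B * D * Dz * Dzz - A * D * Dw * Dww
        - A * B * Dz * Dw + A ^+ 2 * B ^+ 2 = 0].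

(* p has (total) degree at most one: msize p = 1 + total degree (0 for p = 0) *)
Definition deg_le1 (p : {mpoly F[2]}) := (msize p <= 2)%N.

Definition prod_of_linear (p : {mpoly F[2]}) :=
  exists s : seq {mpoly F[2]}, all deg_le1 s /\ p = \prod_(q <- s) q.

End SIC.

(* Main.v *)
Require Import Defs.
From HB Require Import structures.
From mathcomp Require Import all_boot all_order all_algebra.
From mathcomp Require Import complex.
From mathcomp Require Import mpoly.
From mathcomp Require Import ring.
Import Order.TTheory GRing.Theory Num.Theory.
Local Open Scope ring_scope.
Local Open Scope complex_scope.
Set Implicit Arguments. Unset Strict Implicit. Unset Printing Implicit Defensive.
Section Main.
Variable F : numClosedFieldType.
Implicit Types a : nat -> nat -> F.

Lemma dXii (i : 'I_2) : mderiv i ('X_i : {mpoly F[2]}) = 1.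
Proof.
rewrite mderivX mnm1E eqxx.
have -> : (U_(i) - U_(i) = 0)%MM by apply/mnmP=> j; rewrite !mnmE subnn.
by rewrite mpolyX0 scale1r.
Qed.
Lemma dXij (i j : 'I_2) : i != j -> mderiv i ('X_j : {mpoly F[2]}) = 0.
Proof. by move=> h; rewrite mderivX mnm1E eq_sym (negbTE h) scale0r. Qed.
Lemma dX1 (i : 'I_2) : mderiv i (1 : {mpoly F[2]}) = 0.
Proof. by rewrite -mpolyC1 mderivC. Qed.
Lemma ord0_max : (ord0 : 'I_2) != ord_max. Proof. by []. Qed.
Lemma ord_max0 : (ord_max : 'I_2) != ord0. Proof. by []. Qed.

Definition Ds a (z w : F) := a 0 0 + a 1 0 * z + a 0 1 * w + a 2 0 * z^+2 + a 1 1 * (z*w)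
  + a 0 2 * w^+2 + a 2 1 * (z^+2*w) + a 1 2 * (z*w^+2).
Definition Dzs a (z w : F) := a 1 0 + 2%:R * a 2 0 * z + a 1 1 * w + 2%:R * a 2 1 * z * w + a 1 2 * w^+2.
Definition Dws a (z w : F) := a 0 1 + a 1 1 * z + 2%:R * a 0 2 * w + a 2 1 * z^+2 + 2%:R * a 1 2 * z * w.
Definition Dzzs a (z w : F) := 2%:R * a 2 0 + 2%:R * a 2 1 * w.
Definition Dwws a (z w : F) := 2%:R * a 0 2 + 2%:R * a 1 2 * z.
Definition As a (z w : F) := a 2 1 * w^+2 + 2%:R * a 2 0 * w + a 3 0.
Definition Bs a (z w : F) := a 1 2 * z^+2 + 2%:R * a 0 2 * z + a 0 3.

Definition S1s a z w := 3%:R * As a z w * Ds a z w * Dwws a z w - 2%:R * As a z w * Bs a z w * Dzs a z w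
  - 2%:R * As a z w * Dws a z w ^+ 2 + Ds a z w * Dws a z w * Dzzs a z w.
Definition S2s a z w := 3%:R * Bs a z w * Ds a z w * Dzzs a z w - 2%:R * As a z w * Bs a z w * Dws a z w
  - 2%:R * Bs a z w * Dzs a z w ^+ 2 + Ds a z w * Dzs a z w * Dwws a z w.

Ltac evtac := rewrite !expr0 !expr1 !expr2 !mulr1 !mul1r;
  rewrite ?(mderivD, mderivZ, mderivM, dXii, dX1, dXij, mderivC) //;
  rewrite ?(mevalD, mevalZ, mevalM, mevalXU, meval1, meval0, mevalC); ring.

Lemma ev_D a v : (Dpoly a).@[v] = Ds a (v ord0) (v ord_max).
Proof. rewrite /Dpoly /mono /zv /wv /Ds; evtac. Qed.
Lemma ev_Dz a v : (dz (Dpoly a)).@[v] = Dzs a (v ord0) (v ord_max).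
Proof. rewrite /dz /Dpoly /mono /zv /wv /Dzs; evtac. Qed.
Lemma ev_Dw a v : (dw (Dpoly a)).@[v] = Dws a (v ord0) (v ord_max).
Proof. rewrite /dw /Dpoly /mono /zv /wv /Dws; evtac. Qed.
Lemma ev_Dzz a v : (dz (dz (Dpoly a))).@[v] = Dzzs a (v ord0) (v ord_max).
Proof. rewrite /dz /Dpoly /mono /zv /wv /Dzzs; evtac. Qed.
Lemma ev_Dww a v : (dw (dw (Dpoly a))).@[v] = Dwws a (v ord0) (v ord_max).
Proof. rewrite /dw /Dpoly /mono /zv /wv /Dwws; evtac. Qed.
Lemma ev_A a v : (Azpoly a).@[v] = As a (v ord0) (v ord_max).
Proof. rewrite /Azpoly /zv /wv /As; rewrite !expr2 !(mevalD, mevalZ, mevalM, mevalXU, meval1, meval0, mevalC); ring. Qed.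
Lemma ev_B a v : (Bwpoly a).@[v] = Bs a (v ord0) (v ord_max).
Proof. rewrite /Bwpoly /zv /wv /Bs; rewrite !expr2 !(mevalD, mevalZ, mevalM, mevalXU, meval1, meval0, mevalC); ring. Qed.

Lemma mevalnat v k : (k%:R : {mpoly F[2]}).@[v] = k%:R.
Proof. by rewrite -mpolyC_nat mevalC. Qed.

Lemma ev_S1 (A B D Dz Dw Dzz Dww : {mpoly F[2]}) v :
  (3%:R * A * D * Dww - 2%:R * A * B * Dz - 2%:R * A * Dw ^+ 2 + D * Dw * Dzz).@[v] =
  3%:R * A.@[v] * D.@[v] * Dww.@[v] - 2%:R * A.@[v] * B.@[v] * Dz.@[v]
  - 2%:R * A.@[v] * Dw.@[v] ^+ 2 + D.@[v] * Dw.@[v] * Dzz.@[v].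
Proof. by rewrite !expr2 mevalD !mevalB !mevalM (mevalnat v 3) (mevalnat v 2). Qed.

Lemma ev_S2 (A B D Dz Dw Dzz Dww : {mpoly F[2]}) v :
  (3%:R * B * D * Dzz - 2%:R * A * B * Dw - 2%:R * B * Dz ^+ 2 + D * Dz * Dww).@[v] =
  3%:R * B.@[v] * D.@[v] * Dzz.@[v] - 2%:R * A.@[v] * B.@[v] * Dw.@[v]
  - 2%:R * B.@[v] * Dz.@[v] ^+ 2 + D.@[v] * Dz.@[v] * Dww.@[v].
Proof. by rewrite !expr2 mevalD !mevalB !mevalM (mevalnat v 3) (mevalnat v 2). Qed.

Lemma SIC_scalar a : SIC a -> (forall z w, S1s a z w = 0) /\ (forall z w, S2s a z w = 0).
Proof.
case=> h1 h2 _; split=> z w.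
  pose v := fun i : 'I_2 => if i == ord0 then z else w.
  have v0 : v ord0 = z by rewrite /v eqxx.
  have v1 : v ord_max = w by [].
  have := congr1 (meval v) h1.
  rewrite ev_S1 meval0 ev_D ev_Dz ev_Dw ev_Dzz ev_Dww ev_A ev_B v0 v1.
  by rewrite /S1s.
pose v := fun i : 'I_2 => if i == ord0 then z else w.
have v0 : v ord0 = z by rewrite /v eqxx.
have v1 : v ord_max = w by [].
have := congr1 (meval v) h2.
rewrite ev_S2 meval0 ev_D ev_Dz ev_Dw ev_Dzz ev_Dww ev_A ev_B v0 v1.
by rewrite /S2s.
Qed.

Lemma natmul0 (n : nat) (x : F) : (n != 0)%N -> n%:R * x = 0 -> x = 0.
Proof. by move=> n0 /eqP; rewrite mulf_eq0 pnatr_eq0 (negbTE n0) /= => /eqP. Qed.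

Lemma c1_40 a : (forall z w, S1s a z w = 0) ->
  2%:R * (a 2 0) * (a 2 0) * (a 2 1) - 2%:R * (a 2 1) * (a 2 1) * (a 3 0) = 0.
Proof.
move=> h; apply: (natmul0 (n := 24)) => //.
have -> : (24%:R : F) * (2%:R * (a 2 0) * (a 2 0) * (a 2 1) - 2%:R * (a 2 1) * (a 2 1) * (a 3 0)) =
  (1%:R) * S1s a 0%:R 0%:R + - (4%:R) * S1s a 1%:R 0%:R + (6%:R) * S1s a 2%:R 0%:R + - (4%:R) * S1s a 3%:R 0%:R + (1%:R) * S1s a 4%:R 0%:R.
  rewrite /S1s /As /Bs /Ds /Dzs /Dws /Dzzs /Dwws; ring.
by rewrite !h; ring.
Qed.

Lemma c1_30 a : (forall z w, S1s a z w = 0) ->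
  2%:R * (a 1 0) * (a 2 0) * (a 2 1) + 2%:R * (a 2 0) * (a 2 0) * (a 1 1) + 2%:R * (a 2 0) * (a 1 2) * (a 3 0) - 4%:R * (a 1 1) * (a 2 1) * (a 3 0) = 0.
Proof.
move=> h; apply: (natmul0 (n := 12)) => //.
have -> : (12%:R : F) * (2%:R * (a 1 0) * (a 2 0) * (a 2 1) + 2%:R * (a 2 0) * (a 2 0) * (a 1 1) + 2%:R * (a 2 0) * (a 1 2) * (a 3 0) - 4%:R * (a 1 1) * (a 2 1) * (a 3 0)) =
  - (5%:R) * S1s a 0%:R 0%:R + (18%:R) * S1s a 1%:R 0%:R + - (24%:R) * S1s a 2%:R 0%:R + (14%:R) * S1s a 3%:R 0%:R + - (3%:R) * S1s a 4%:R 0%:R.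
  rewrite /S1s /As /Bs /Ds /Dzs /Dws /Dzzs /Dwws; ring.
by rewrite !h; ring.
Qed.

Lemma c1_23 a : (forall z w, S1s a z w = 0) ->
  - 4%:R * (a 2 0) * (a 1 2) * (a 1 2) + 2%:R * (a 1 1) * (a 2 1) * (a 1 2) - 4%:R * (a 0 2) * (a 2 1) * (a 2 1) = 0.
Proof.
move=> h; apply: (natmul0 (n := 120)) => //.
have -> : (120%:R : F) * (- 4%:R * (a 2 0) * (a 1 2) * (a 1 2) + 2%:R * (a 1 1) * (a 2 1) * (a 1 2) - 4%:R * (a 0 2) * (a 2 1) * (a 2 1)) =
  - (1%:R) * S1s a 0%:R 0%:R + (5%:R) * S1s a 1%:R 1%:R + - (10%:R) * S1s a 2%:R 2%:R + (10%:R) * S1s a 3%:R 3%:R + - (5%:R) * S1s a 4%:R 4%:R + (1%:R) * S1s a 5%:R 5%:R.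
  rewrite /S1s /As /Bs /Ds /Dzs /Dws /Dzzs /Dwws; ring.
by rewrite !h; ring.
Qed.

Lemma c2_04 a : (forall z w, S2s a z w = 0) ->
  2%:R * (a 0 2) * (a 0 2) * (a 1 2) - 2%:R * (a 1 2) * (a 1 2) * (a 0 3) = 0.
Proof.
move=> h; apply: (natmul0 (n := 24)) => //.
have -> : (24%:R : F) * (2%:R * (a 0 2) * (a 0 2) * (a 1 2) - 2%:R * (a 1 2) * (a 1 2) * (a 0 3)) =
  (1%:R) * S2s a 0%:R 0%:R + - (4%:R) * S2s a 0%:R 1%:R + (6%:R) * S2s a 0%:R 2%:R + - (4%:R) * S2s a 0%:R 3%:R + (1%:R) * S2s a 0%:R 4%:R.
  rewrite /S2s /As /Bs /Ds /Dzs /Dws /Dzzs /Dwws; ring.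
by rewrite !h; ring.
Qed.

Lemma c2_03 a : (forall z w, S2s a z w = 0) ->
  2%:R * (a 0 1) * (a 0 2) * (a 1 2) + 2%:R * (a 1 1) * (a 0 2) * (a 0 2) - 4%:R * (a 1 1) * (a 1 2) * (a 0 3) + 2%:R * (a 0 2) * (a 2 1) * (a 0 3) = 0.
Proof.
move=> h; apply: (natmul0 (n := 12)) => //.
have -> : (12%:R : F) * (2%:R * (a 0 1) * (a 0 2) * (a 1 2) + 2%:R * (a 1 1) * (a 0 2) * (a 0 2) - 4%:R * (a 1 1) * (a 1 2) * (a 0 3) + 2%:R * (a 0 2) * (a 2 1) * (a 0 3)) =
  - (5%:R) * S2s a 0%:R 0%:R + (18%:R) * S2s a 0%:R 1%:R + - (24%:R) * S2s a 0%:R 2%:R + (14%:R) * S2s a 0%:R 3%:R + - (3%:R) * S2s a 0%:R 4%:R.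
  rewrite /S2s /As /Bs /Ds /Dzs /Dws /Dzzs /Dwws; ring.
by rewrite !h; ring.
Qed.

Lemma c2_02 a : (forall z w, S2s a z w = 0) ->
  2%:R * (a 0 0) * (a 0 2) * (a 1 2) + 2%:R * (a 1 0) * (a 0 2) * (a 0 2) - 4%:R * (a 1 0) * (a 1 2) * (a 0 3) + 2%:R * (a 0 1) * (a 1 1) * (a 0 2) + 4%:R * (a 0 1) * (a 2 1) * (a 0 3) - 2%:R * (a 2 0) * (a 0 2) * (a 0 3) - 2%:R * (a 1 1) * (a 1 1) * (a 0 3) = 0.
Proof.
move=> h; apply: (natmul0 (n := 24)) => //.
have -> : (24%:R : F) * (2%:R * (a 0 0) * (a 0 2) * (a 1 2) + 2%:R * (a 1 0) * (a 0 2) * (a 0 2) - 4%:R * (a 1 0) * (a 1 2) * (a 0 3) + 2%:R * (a 0 1) * (a 1 1) * (a 0 2) + 4%:R * (a 0 1) * (a 2 1) * (a 0 3) - 2%:R * (a 2 0) * (a 0 2) * (a 0 3) - 2%:R * (a 1 1) * (a 1 1) * (a 0 3)) =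
  (35%:R) * S2s a 0%:R 0%:R + - (104%:R) * S2s a 0%:R 1%:R + (114%:R) * S2s a 0%:R 2%:R + - (56%:R) * S2s a 0%:R 3%:R + (11%:R) * S2s a 0%:R 4%:R.
  rewrite /S2s /As /Bs /Ds /Dzs /Dws /Dzzs /Dwws; ring.
by rewrite !h; ring.
Qed.

Lemma c2_10 a : (forall z w, S2s a z w = 0) ->
  2%:R * (a 0 0) * (a 1 0) * (a 1 2) + 16%:R * (a 0 0) * (a 2 0) * (a 0 2) - 2%:R * (a 1 0) * (a 1 0) * (a 0 2) - 2%:R * (a 1 0) * (a 2 0) * (a 0 3) - 4%:R * (a 0 1) * (a 0 2) * (a 3 0) - 2%:R * (a 1 1) * (a 3 0) * (a 0 3) = 0.
Proof.
move=> h; apply: (natmul0 (n := 12)) => //.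
have -> : (12%:R : F) * (2%:R * (a 0 0) * (a 1 0) * (a 1 2) + 16%:R * (a 0 0) * (a 2 0) * (a 0 2) - 2%:R * (a 1 0) * (a 1 0) * (a 0 2) - 2%:R * (a 1 0) * (a 2 0) * (a 0 3) - 4%:R * (a 0 1) * (a 0 2) * (a 3 0) - 2%:R * (a 1 1) * (a 3 0) * (a 0 3)) =
  - (25%:R) * S2s a 0%:R 0%:R + (48%:R) * S2s a 1%:R 0%:R + - (36%:R) * S2s a 2%:R 0%:R + (16%:R) * S2s a 3%:R 0%:R + - (3%:R) * S2s a 4%:R 0%:R.
  rewrite /S2s /As /Bs /Ds /Dzs /Dws /Dzzs /Dwws; ring.
by rewrite !h; ring.
Qed.

Definition Lf (c0 c1 c2 : F) : {mpoly F[2]} := c0%:MP + c1%:MP * zv F + c2%:MP * wv F.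

Lemma deg_Lf c0 c1 c2 : deg_le1 (Lf c0 c1 c2).
Proof.
rewrite /deg_le1 /Lf.
have hX : forall (c : F) (i : 'I_2), (msize (c%:MP * 'X_i : {mpoly F[2]}) <= 2)%N.
  by move=> c i; rewrite mul_mpolyC; apply: (leq_trans (msizeZ_le _ _)); rewrite msizeX mdeg1.
apply: (leq_trans (msizeD_le _ _)); rewrite geq_max; apply/andP; split; last exact: hX.
apply: (leq_trans (msizeD_le _ _)); rewrite geq_max; apply/andP; split; last exact: hX.
by rewrite msizeC; case: (c0 != 0).
Qed.

Lemma pol1 p c0 c1 c2 : p = Lf c0 c1 c2 -> prod_of_linear p.
Proof. by move=> ->; exists [:: Lf c0 c1 c2]; rewrite /= deg_Lf big_cons big_nil mulr1. Qed.
Lemma pol2 p c0 c1 c2 d0 d1 d2 : p = Lf c0 c1 c2 * Lf d0 d1 d2 -> prod_of_linear p.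
Proof. by move=> ->; exists [:: Lf c0 c1 c2; Lf d0 d1 d2]; rewrite /= !deg_Lf !big_cons big_nil mulr1. Qed.
Lemma pol3 p c0 c1 c2 d0 d1 d2 e0 e1 e2 :
  p = Lf c0 c1 c2 * Lf d0 d1 d2 * Lf e0 e1 e2 -> prod_of_linear p.
Proof.
move=> ->; exists [:: Lf c0 c1 c2; Lf d0 d1 d2; Lf e0 e1 e2].
by rewrite /= !deg_Lf !big_cons big_nil mulr1 mulrA.
Qed.

Ltac factac := rewrite /Dpoly /mono /Lf /zv /wv; rewrite -!mul_mpolyC; ring.

Lemma FA a k p q t : a 2 1 = k -> a 1 2 = k * t -> a 2 0 = k * p -> a 0 2 = k * t * q ->
  a 1 1 = 2%:R * k * (p * t + q) -> a 1 0 = k * (p^+2 * t + 2%:R * p * q) ->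
  a 0 1 = k * (2%:R * p * t * q + q^+2) -> a 0 0 = k * (p^+2 * t * q + p * q^+2) ->
  prod_of_linear (Dpoly a).
Proof.
move=> h21 h12 h20 h02 h11 h10 h01 h00; apply: (pol3 (c0 := k * q) (c1 := k) (c2 := 0)
  (d0 := p) (d1 := 0) (d2 := 1) (e0 := p * t + q) (e1 := 1) (e2 := t)).
rewrite /Dpoly /mono h21 h12 h20 h02 h11 h10 h01 h00; factac.
Qed.

Lemma FB a k p r1 r2 : a 2 1 = k -> a 1 2 = 0 -> a 2 0 = k * p -> a 0 2 = 0 ->
  a 1 1 = - (k * (r1 + r2)) -> a 1 0 = - (k * (r1 + r2)) * p ->
  a 0 1 = k * (r1 * r2) -> a 0 0 = k * (r1 * r2) * p ->
  prod_of_linear (Dpoly a).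
Proof.
move=> h21 h12 h20 h02 h11 h10 h01 h00; apply: (pol3 (c0 := k * p) (c1 := 0) (c2 := k)
  (d0 := - r1) (d1 := 1) (d2 := 0) (e0 := - r2) (e1 := 1) (e2 := 0)).
rewrite /Dpoly /mono h21 h12 h20 h02 h11 h10 h01 h00; factac.
Qed.

Lemma FC a k q r1 r2 : a 2 1 = 0 -> a 1 2 = k -> a 2 0 = 0 -> a 0 2 = k * q ->
  a 1 1 = - (k * (r1 + r2)) -> a 0 1 = - (k * (r1 + r2)) * q ->
  a 1 0 = k * (r1 * r2) -> a 0 0 = k * (r1 * r2) * q ->
  prod_of_linear (Dpoly a).
Proof.
move=> h21 h12 h20 h02 h11 h01 h10 h00; apply: (pol3 (c0 := k * q) (c1 := k) (c2 := 0)
  (d0 := - r1) (d1 := 0) (d2 := 1) (e0 := - r2) (e1 := 0) (e2 := 1)).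
rewrite /Dpoly /mono h21 h12 h20 h02 h11 h10 h01 h00; factac.
Qed.

Lemma FD1 a k al be : a 2 1 = 0 -> a 1 2 = 0 -> a 2 0 = 0 -> a 0 2 = 0 ->
  a 1 1 = k -> a 0 1 = k * al -> a 1 0 = k * be -> a 0 0 = k * al * be ->
  prod_of_linear (Dpoly a).
Proof.
move=> h21 h12 h20 h02 h11 h01 h10 h00; apply: (pol2 (c0 := k * al) (c1 := k) (c2 := 0)
  (d0 := be) (d1 := 0) (d2 := 1)).
rewrite /Dpoly /mono h21 h12 h20 h02 h11 h10 h01 h00; factac.
Qed.

Lemma FD2a a k s al be : a 2 1 = 0 -> a 1 2 = 0 -> a 1 1 = 0 -> a 2 0 = k ->
  a 0 2 = - (k * s^+2) -> a 1 0 = 2%:R * k * al -> a 0 1 = - (2%:R * k * s^+2 * be) ->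
  a 0 0 = k * al^+2 - k * s^+2 * be^+2 ->
  prod_of_linear (Dpoly a).
Proof.
move=> h21 h12 h11 h20 h02 h10 h01 h00; apply: (pol2 (c0 := k * (al - s * be)) (c1 := k) (c2 := - (k * s))
  (d0 := al + s * be) (d1 := 1) (d2 := s)).
rewrite /Dpoly /mono h21 h12 h20 h02 h11 h10 h01 h00; factac.
Qed.

Lemma FD2b a k r1 r2 : a 2 1 = 0 -> a 1 2 = 0 -> a 1 1 = 0 -> a 0 2 = 0 -> a 0 1 = 0 ->
  a 2 0 = k -> a 1 0 = - (k * (r1 + r2)) -> a 0 0 = k * (r1 * r2) ->
  prod_of_linear (Dpoly a).
Proof.
move=> h21 h12 h11 h02 h01 h20 h10 h00; apply: (pol2 (c0 := - (k * r1)) (c1 := k) (c2 := 0)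
  (d0 := - r2) (d1 := 1) (d2 := 0)).
rewrite /Dpoly /mono h21 h12 h20 h02 h11 h10 h01 h00; factac.
Qed.

Lemma FD2c a k r1 r2 : a 2 1 = 0 -> a 1 2 = 0 -> a 1 1 = 0 -> a 2 0 = 0 -> a 1 0 = 0 ->
  a 0 2 = k -> a 0 1 = - (k * (r1 + r2)) -> a 0 0 = k * (r1 * r2) ->
  prod_of_linear (Dpoly a).
Proof.
move=> h21 h12 h11 h20 h10 h02 h01 h00; apply: (pol2 (c0 := - (k * r1)) (c1 := 0) (c2 := k)
  (d0 := - r2) (d1 := 0) (d2 := 1)).
rewrite /Dpoly /mono h21 h12 h20 h02 h11 h10 h01 h00; factac.
Qed.

Lemma FD2d a : a 2 1 = 0 -> a 1 2 = 0 -> a 1 1 = 0 -> a 2 0 = 0 -> a 0 2 = 0 ->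
  prod_of_linear (Dpoly a).
Proof.
move=> h21 h12 h11 h20 h02; apply: (pol1 (c0 := a 0 0) (c1 := a 1 0) (c2 := a 0 1)).
rewrite /Dpoly /mono h21 h12 h20 h02 h11; factac.
Qed.

Lemma quad (c2 c1 c0 : F) : c2 != 0 ->
  exists r1 r2, c1 = - (c2 * (r1 + r2)) /\ c0 = c2 * (r1 * r2).
Proof.
move=> c20; set s := sqrtC (c1 ^+ 2 - 4%:R * c2 * c0).
have hs : s ^+ 2 = c1 ^+ 2 - 4%:R * c2 * c0 by rewrite /s sqrtCK.
exists ((- c1 + s) / (2%:R * c2)), ((- c1 - s) / (2%:R * c2)); split.
  by field.
have -> : c2 * ((- c1 + s) / (2%:R * c2) * ((- c1 - s) / (2%:R * c2))) = (c1 ^+ 2 - s ^+ 2) / (4%:R * c2).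
  by field.
by rewrite hs; field.
Qed.

Lemma solve1 (c x e r : F) : c != 0 -> r = 0 -> r = c * (x - e) -> x = e.
Proof.
move=> c0 r0 hr; apply/eqP; rewrite -subr_eq0; move: r0; rewrite hr => /eqP.
by rewrite mulf_eq0 (negbTE c0).
Qed.
Lemma sq0 (c x r : F) : c != 0 -> r = 0 -> r = c * x ^+ 2 -> x = 0.
Proof.
move=> c0 r0 hr; apply/eqP; move: r0; rewrite hr => /eqP.
by rewrite mulf_eq0 (negbTE c0) /= expf_eq0.
Qed.

Ltac nz := rewrite ?oppr_eq0 ?mulf_eq0 ?expf_eq0 ?pnatr_eq0 ?invr_eq0 /=;
  repeat match goal with H : is_true (?x != 0) |- _ => rewrite (negbTE H) /= end; done.
Ltac fld := field; repeat match goal with H : is_true (?x != 0) |- _ => rewrite H /= end; try done.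
Ltac slv c E := apply: (solve1 (c := c) _ E); [nz | fld].

Theorem main a : plucker a -> SIC a -> prod_of_linear (Dpoly a).
Proof.
case=> P1 P2 P3 P4 P5 hS; have [h1 h2] := SIC_scalar hS.
have E1 := c1_40 h1; have E2 := c1_30 h1; have E3 := c1_23 h1.
have E4 := c2_04 h2; have E5 := c2_03 h2; have E6 := c2_02 h2; have E7 := c2_10 h2.
have [k0|k0] := eqVneq (a 2 1) 0; have [t0|t0] := eqVneq (a 1 2) 0.
-
  rewrite k0 t0 in P1 P2 P3 P4 P5 E1 E2 E3 E4 E5 E6 E7.
  have [m0|m0] := eqVneq (a 1 1) 0.
  + rewrite m0 in P1 P2 P3 P4 P5 E1 E2 E3 E4 E5 E6 E7.
    have [p0|p0] := eqVneq (a 2 0) 0; have [q0|q0] := eqVneq (a 0 2) 0.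
    * exact: (FD2d k0 t0 m0 p0 q0).
    * have h10 : a 1 0 = 0.
        rewrite p0 in P2; slv (- a 0 2) P2.
      have [r1 [r2 [hr1 hr2]]] := quad (a 0 1) (a 0 0) q0.
      exact: (FD2c k0 t0 m0 p0 h10 (erefl _) hr1 hr2).
    * have h01 : a 0 1 = 0.
        rewrite q0 in P4; slv (- a 2 0) P4.
      have [r1 [r2 [hr1 hr2]]] := quad (a 1 0) (a 0 0) p0.
      exact: (FD2b k0 t0 m0 q0 h01 (erefl _) hr1 hr2).
    * set s := sqrtC (- (a 0 2 / a 2 0)).
      have hs : s ^+ 2 = - (a 0 2 / a 2 0) by rewrite /s sqrtCK.
      have h03 : a 0 3 = a 0 2 * a 1 0 / a 2 0 by slv (a 2 0) P2.
      have h30 : a 3 0 = a 0 1 * a 2 0 / a 0 2 by slv (a 0 2) P4.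
      rewrite h03 h30 in E7.
      apply: (FD2a (k := a 2 0) (s := s) (al := a 1 0 / (2%:R * a 2 0))
                   (be := a 0 1 / (2%:R * a 0 2))) => //.
      -- by rewrite hs; fld.
      -- by fld.
      -- by rewrite hs; fld.
      -- rewrite hs; slv (16%:R * a 2 0 * a 0 2) E7.
  + have h20 : a 2 0 = 0.
      apply: (sq0 (c := 2%:R * a 1 1) _ E2); [nz | ring].
    rewrite h20 in E5 E6 E7 P2 P3 P4.
    have h02 : a 0 2 = 0.
      apply: (sq0 (c := 2%:R * a 1 1) _ E5); [nz | ring].
    rewrite h02 in E6 E7 P2 P3 P4.
    have h03 : a 0 3 = 0 by slv (- (2%:R * a 1 1 ^+ 2)) E6.
    rewrite h03 in P3.
    have h00 : a 0 0 = a 0 1 * a 1 0 / a 1 1 by slv (a 1 1) P3.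
    apply: (FD1 (k := a 1 1) (al := a 0 1 / a 1 1) (be := a 1 0 / a 1 1)) => //.
    * by fld.
    * by fld.
    * by rewrite h00; fld.
-
  rewrite k0 in P1 P2 P3 P4 P5 E1 E2 E3 E4 E5 E6 E7.
  have h20 : a 2 0 = 0 by slv (- (4%:R * a 1 2 ^+ 2)) E3.
  have [r1 [r2 [hr1 hr2]]] := quad (a 1 1) (a 1 0) t0.
  have h01 : a 0 1 = a 1 1 * (a 0 2 / a 1 2) by slv (a 1 2) P1.
  rewrite h20 in P2.
  have h00 : a 0 0 = a 1 0 * (a 0 2 / a 1 2) by slv (a 1 2) P2.
  apply: (FC (k := a 1 2) (q := a 0 2 / a 1 2) (r1 := r1) (r2 := r2)) => //.
  + by fld.
  + by rewrite h01 hr1.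
  + by rewrite h00 hr2.
-
  rewrite t0 in P1 P2 P3 P4 P5 E1 E2 E3 E4 E5 E6 E7.
  have h02 : a 0 2 = 0 by slv (- (4%:R * a 2 1 ^+ 2)) E3.
  have [r1 [r2 [hr1 hr2]]] := quad (a 1 1) (a 0 1) k0.
  have h10 : a 1 0 = a 1 1 * (a 2 0 / a 2 1) by slv (a 2 1) P5.
  rewrite h02 in P4.
  have h00 : a 0 0 = a 0 1 * (a 2 0 / a 2 1) by slv (a 2 1) P4.
  apply: (FB (k := a 2 1) (p := a 2 0 / a 2 1) (r1 := r1) (r2 := r2)) => //.
  + by fld.
  + by rewrite h10 hr1.
  + by rewrite h00 hr2.
-
  have h30 : a 3 0 = a 2 0 ^+ 2 / a 2 1 by slv (- (2%:R * a 2 1 ^+ 2)) E1.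
  have h03 : a 0 3 = a 0 2 ^+ 2 / a 1 2 by slv (- (2%:R * a 1 2 ^+ 2)) E4.
  have h11 : a 1 1 = 2%:R * (a 2 1) * ((a 2 0 / a 2 1) * (a 1 2 / a 2 1) + (a 0 2 / a 1 2)) by slv (2%:R * a 2 1 * a 1 2) E3.
  rewrite h30 h11 in P5.
  have h10 : a 1 0 = (a 2 1) * ((a 2 0 / a 2 1) ^+ 2 * (a 1 2 / a 2 1) + 2%:R * (a 2 0 / a 2 1) * (a 0 2 / a 1 2)) by slv (a 2 1) P5.
  rewrite h03 h11 in P1.
  have h01 : a 0 1 = (a 2 1) * (2%:R * (a 2 0 / a 2 1) * (a 1 2 / a 2 1) * (a 0 2 / a 1 2) + (a 0 2 / a 1 2) ^+ 2) by slv (a 1 2) P1.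
  rewrite h30 h01 in P4.
  have h00 : a 0 0 = (a 2 1) * ((a 2 0 / a 2 1) ^+ 2 * (a 1 2 / a 2 1) * (a 0 2 / a 1 2) + (a 2 0 / a 2 1) * (a 0 2 / a 1 2) ^+ 2) by slv (a 2 1) P4.
  apply: (FA (k := a 2 1) (p := a 2 0 / a 2 1) (q := a 0 2 / a 1 2) (t := a 1 2 / a 2 1)) => //.
  + by fld.
  + by fld.
  + by fld.
Qed.

End Main.

Unset Implicit Arguments.

(* C is modelled as R[i] for a real closed field R (e.g. the reals). *)
Theorem lemma4p1 (R : rcfType) (a : nat -> nat -> R[i]) :
  proj_point a -> plucker a -> SIC a -> prod_of_linear (Dpoly a).
Proof.
move=> _ hp hs; exact: (main hp hs).
Qed.
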